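(* Let $N,L,s$ be positive integers with $s\le L$, let $\mathbf{D}\in\mathbb{R}^{N\times N}$ and $\mathbf{H}\in\mathbb{R}^{N\times L}$, and consider the discrete-time linear system $\mathbf{x}_k=\mathbf{D}\mathbf{x}_{k-1}+\mathbf{H}\mathbf{h}_k$ with state $\mathbf{x}_k\in\mathbb{R}^N$ and inputs $\mathbf{h}_k\in\mathbb{R}^L$ constrained to satisfy $\|\mathbf{h}_k\|_0\le s$. Let $R_{\mathbf{D}}=\operatorname{rank}(\mathbf{D})$. Then the system is $s$-sparse-controllable if and only if $$\operatorname{rank}\begin{bmatrix}\lambda\mathbf{I}-\mathbf{D} & \mathbf{H}\end{bmatrix}=N\ \text{ for all }\lambda\in\mathbb{C},\qquad\text{and}\qquad N\le s+R_{\mathbf{D}}.$$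
   Context: $\|\cdot\|_0$ denotes the number of nonzero entries of a vector. The system is called $s$-sparse-controllable if for every initial state $\mathbf{x}_0=\mathbf{x}_{\mathrm{init}}\in\mathbb{R}^N$ and every final state $\mathbf{x}_{\mathrm{final}}\in\mathbb{R}^N$ there exist a finite $K$ and inputs $\mathbf{h}_1,\dots,\mathbf{h}_K\in\mathbb{R}^L$ with $\|\mathbf{h}_k\|_0\le s$ for all $k$ that steer the system from $\mathbf{x}_0=\mathbf{x}_{\mathrm{init}}$ to $\mathbf{x}_K=\mathbf{x}_{\mathrm{final}}$. *)

(* Defs.v *)
From HB Require Import structures.
From mathcomp Require Import all_boot all_order all_algebra.
From mathcomp Require Import complex.
From mathcomp Require Import reals.
Set Implicit Arguments. Unset Strict Implicit. Unset Printing Implicit Defensive.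
Import Order.TTheory GRing.Theory Num.Theory.
Local Open Scope ring_scope.

Definition l0norm (R : ringType) (L : nat) (v : 'cV[R]_L) : nat :=
  #|[set i : 'I_L | v i 0 != 0]|.

Fixpoint traj (R : ringType) (N L : nat) (D : 'M[R]_N) (H : 'M[R]_(N, L))
  (x0 : 'cV[R]_N) (h : nat -> 'cV[R]_L) (k : nat) : 'cV[R]_N :=
  match k with
  | 0 => x0
  | k'.+1 => D *m traj D H x0 h k' + H *m h k'.+1
  end.

Definition sparse_controllable (R : ringType) (N L s : nat)
  (D : 'M[R]_N) (H : 'M[R]_(N, L)) : Prop :=
  forall xinit xfinal : 'cV[R]_N,
    exists (K : nat) (h : nat -> 'cV[R]_L),
      (forall k, (1 <= k <= K)%N -> (l0norm (h k) <= s)%N) /\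
      traj D H xinit h K = xfinal.

(* Main.v *)
Require Import Defs.
From HB Require Import structures.
From mathcomp Require Import all_boot all_order all_algebra.
From mathcomp Require Import complex.
From mathcomp Require Import reals.
Import Order.TTheory GRing.Theory Num.Theory.
Local Open Scope ring_scope.
Section Ctrl.
Variables (R : realType) (n L s : nat) (D : 'M[R]_n.+1) (H : 'M[R]_(n.+1, L)).
Local Notation N := n.+1.

Lemma DmulX k : D *m D ^+ k = D ^+ k.+1.
Proof. by rewrite exprS mulmxE. Qed.
Lemma DXmul k : D ^+ k *m D = D ^+ k.+1.
Proof. by rewrite exprSr mulmxE. Qed.

Lemma traj_lin x0 h k : traj D H x0 h k = D ^+ k *m x0 + traj D H 0 h k.
Proof.
elim: k => [|k IH] /=; first by rewrite expr0 mul1mx addr0.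
by rewrite IH mulmxDr mulmxA DmulX addrA.
Qed.

Lemma traj_ext x0 h h' K : (forall k, (1 <= k <= K)%N -> h k = h' k) ->
  traj D H x0 h K = traj D H x0 h' K.
Proof.
elim: K => [|K IH] E //=.
rewrite IH ?E //; first by rewrite ltnS leqnn.
by move=> k /andP[k1 kK]; apply: E; rewrite k1 (leq_trans kK).
Qed.

Definition Good K m := forall y : 'cV[R]_N, exists h : nat -> 'cV[R]_L,
  (forall k, (1 <= k <= K)%N -> (l0norm (h k) <= s)%N) /\
  exists u, D ^+ m *m u = 0 /\ y = traj D H 0 h K + u.

Lemma Good_step K m :
  (forall y : 'cV[R]_N, exists a z, (l0norm a <= s)%N /\ y = H *m a + D *m z) ->
  Good K m.+1 -> Good K.+1 m.
Proof.
move=> S0 G y; have [a [z [la ->]]] := S0 y.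
have [h [hs [u [hu ez]]]] := G z.
exists (fun k => if k == K.+1 then a else h k); split.
  move=> k /andP[k1 kK]; case: eqP => [_|ne]; first done.
  by apply: hs; rewrite k1 /= -ltnS ltn_neqAle kK andbT; apply/eqP.
exists (D *m u); split; first by rewrite mulmxA DXmul.
rewrite /= eqxx (@traj_ext 0 _ h) => [|k /andP[_ kK]]; last first.
  by case: eqP => // kE; rewrite kE ltnn in kK.
by rewrite ez mulmxDr addrA [H *m a + _]addrC.
Qed.

Lemma Good_down m : forall K,
  (forall y : 'cV[R]_N, exists a z, (l0norm a <= s)%N /\ y = H *m a + D *m z) ->
  Good K m -> Good (K + m) 0.
Proof.
elim: m => [|m IH] K S0 G; first by rewrite addn0.
by rewrite -addSnnS; apply: IH => //; apply: Good_step.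
Qed.

Lemma Good0_ctrl K : Good K 0 -> sparse_controllable s D H.
Proof.
move=> G xi xf; have [h [hs [u [hu e]]]] := G (xf - D ^+ K *m xi).
exists K, h; split => //.
move: hu; rewrite expr0 mul1mx => hu; rewrite hu addr0 in e.
by rewrite traj_lin -e addrC subrK.
Qed.

Definition Reach1 K y := exists h : nat -> 'cV[R]_L,
  (forall k, (1 <= k <= K)%N -> (l0norm (h k) <= 1)%N) /\ traj D H 0 h K = y.

Lemma l0norm_delta (c : R) (j : 'I_L) : (l0norm (c *: (delta_mx j ord0 : 'cV[R]_L)) <= 1)%N.
Proof.
rewrite /l0norm; apply: (leq_trans _ (eq_leq (cards1 j))); apply: subset_leq_card; apply/subsetP => i.
rewrite !inE !mxE; case: (eqVneq i j) => // _; by rewrite mulr0 eqxx.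
Qed.

Lemma Reach1_step K y c j : Reach1 K y -> Reach1 K.+1 (D *m y + c *: col j H).
Proof.
move=> [h [hs e]].
exists (fun k => if k == K.+1 then c *: delta_mx j ord0 else h k); split.
  move=> k /andP[k1 kK]; case: eqP => [_|ne]; first exact: l0norm_delta.
  by apply: hs; rewrite k1 /= -ltnS ltn_neqAle kK andbT; apply/eqP.
rewrite /= eqxx (@traj_ext 0 _ h) => [|k /andP[_ kK]]; last first.
  by case: eqP => // kE; rewrite kE ltnn in kK.
by rewrite e -scalemxAr -colE.
Qed.

Lemma Reach1_stepm (b : 'cV[R]_N) : (exists j, b = col j H) ->
  forall m (c : nat -> R) K y, Reach1 K y ->
  Reach1 (K + m) (D ^+ m *m y + \sum_(i < m) c i *: (D ^+ i *m b)).
Proof.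
move=> [j ->]; elim=> [|m IH] c K y Ry.
  by rewrite addn0 expr0 mul1mx big_ord0 addr0.
have := Reach1_step _ _ (c 0%N) j (IH (fun i => c i.+1) K y Ry).
rewrite addnS; congr Reach1.
rewrite big_ord_recl expr0 mul1mx mulmxDr mulmxA DmulX mulmx_sumr -addrA; congr (_ + _).
rewrite addrC; congr (_ + _); apply: eq_bigr => i _.
by rewrite -scalemxAr mulmxA DmulX.
Qed.


Lemma horner_pow k : horner_mx D ('X ^+ k) = D ^+ k.
Proof. by rewrite rmorphXn /= horner_mx_X. Qed.

Lemma horner_sum (p : {poly R}) m : (size p <= m)%N ->
  horner_mx D p = \sum_(i < m) p`_i *: D ^+ i.
Proof.
move=> sp.
have e : p = \poly_(i < m) p`_i.
  apply/polyP => k; rewrite coef_poly; case: ltnP => // km.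
  by rewrite nth_default // (leq_trans sp km).
rewrite {1}e poly_def rmorph_sum; apply: eq_bigr => i _.
by rewrite -mul_polyC rmorphM /= horner_mx_C horner_pow -mulmxE mul_scalar_mx.
Qed.

Lemma horner_mod (p : {poly R}) : horner_mx D (p %% char_poly D) = horner_mx D p.
Proof.
rewrite [in RHS](divp_eq p (char_poly D)) rmorphD rmorphM /=.
by rewrite Cayley_Hamilton mulr0 add0r.
Qed.

Lemma size_mod_char (p : {poly R}) : (size (p %% char_poly D)%R <= N)%N.
Proof.
rewrite -ltnS -(size_char_poly D) ltn_modp.
exact: monic_neq0 (char_poly_monic D).
Qed.


Lemma Reach1_iter k : forall F : nat -> 'cV[R]_N,
  (forall i, exists (j : 'I_L) (r : {poly R}), (size r <= N)%N /\ F i = horner_mx D r *m col j H) ->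
  Reach1 (N * k) (\sum_(i < k) D ^+ (N * i) *m F i).
Proof.
elim: k => [|k IH] F hF.
  rewrite muln0 big_ord0; exists (fun _ => 0); split => //.
  by move=> k /andP[k1 k0]; have := leq_trans k1 k0.
have [j [r [sr e0]]] := hF 0%N.
have := @Reach1_stepm (col j H) (ex_intro _ j erefl) N (fun i => r`_i)
   _ _ (IH (fun i => F i.+1) (fun i => hF i.+1)).
rewrite mulnS addnC; congr Reach1.
rewrite [in RHS]big_ord_recl muln0 expr0 mul1mx addrC; congr (_ + _).
  by rewrite e0 (horner_sum _ _ sr) mulmx_suml; apply: eq_bigr => i _; rewrite scalemxAl.
rewrite mulmx_sumr; apply: eq_bigr => i _.
by rewrite mulmxA mulmxE -exprD /= mulnS.
Qed.


Lemma powD i j : D ^+ i *m D ^+ j = D ^+ (i + j).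
Proof. by rewrite exprD mulmxE. Qed.

Lemma rank_powS k : (\rank (D ^+ k.+1) <= \rank (D ^+ k))%N.
Proof. by rewrite -DXmul mxrankM_maxl. Qed.

Lemma exists_stable r : forall a, (\rank (D ^+ a) <= r)%N ->
  exists k, (a <= k)%N /\ \rank (D ^+ k.+1) = \rank (D ^+ k).
Proof.
elim: r => [|r IH] a ra.
  exists a; split => //; apply/eqP; rewrite eqn_leq rank_powS /=.
  by rewrite (leq_trans ra).
case: (eqVneq (\rank (D ^+ a.+1)) (\rank (D ^+ a))) => [e|ne].
  by exists a.
have lt : (\rank (D ^+ a.+1) < \rank (D ^+ a))%N by rewrite ltn_neqAle ne rank_powS.
have [k [ak ek]] := IH a.+1 (leq_trans lt ra).
by exists k; split => //; apply: ltnW.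
Qed.

Lemma stable_up k : \rank (D ^+ k.+1) = \rank (D ^+ k) ->
  forall j, ((D ^+ k)^T <= (D ^+ (j + k))^T)%MS.
Proof.
move=> e.
have s1 : ((D ^+ k.+1)^T <= (D ^+ k)^T)%MS by rewrite -DXmul trmx_mul submxMl.
have e1 : ((D ^+ k)^T <= (D ^+ k.+1)^T)%MS.
  have := (mxrank_leqif_eq s1).2; rewrite !mxrank_tr e eqxx.
  by move/esym/andP=> [].
elim=> [|j IH]; first by rewrite add0n.
apply: (submx_trans IH).
have := submxMr (D ^+ j)^T e1.
by rewrite -!trmx_mul !powD addnS addSn.
Qed.

Lemma fitting a : exists M, (a <= M)%N /\ forall y : 'cV[R]_N,
  exists x u, D ^+ M *m u = 0 /\ y = D ^+ M *m x + u.
Proof.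
have [k [ak ek]] := exists_stable (\rank (D ^+ a)) a (leqnn _).
exists k; split => // y.
have := stable_up k ek k.
have : ((D ^+ k *m y)^T <= (D ^+ k)^T)%MS by rewrite trmx_mul submxMl.
move=> h1 h2; have /submxP[x ex] := submx_trans h1 h2.
exists x^T, (y - D ^+ k *m x^T); split; last first.
  by rewrite addrC subrK.
rewrite mulmxBr !mulmxA powD.
have -> : D ^+ k *m y = D ^+ (k + k) *m x^T.
  by rewrite -(trmxK (D ^+ k *m y)) ex trmx_mul trmxK.
by rewrite subrr.
Qed.

Lemma suff_main (HL : (0 < L)%N) (Hs : (0 < s)%N) :
  (forall x : 'cV[R]_N, exists q : 'I_L -> {poly R},
      x = \sum_j horner_mx D (q j) *m col j H) ->
  (forall y : 'cV[R]_N, exists a z, (l0norm a <= s)%N /\ y = H *m a + D *m z) ->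
  sparse_controllable s D H.
Proof.
move=> Kal S0.
have [M [aM fit]] := fitting (N * L).
apply: (Good0_ctrl (N * L + M)); apply: Good_down => // y.
have [x [u [hu ey]]] := fit y; have [q eq] := Kal x.
pose j0 : 'I_L := Ordinal HL.
pose F i := horner_mx D (('X^(M - N * i) * q (insubd j0 i)) %% char_poly D)
   *m col (insubd j0 i) H.
have R1 := Reach1_iter L F (fun i => ex_intro _ (insubd j0 i)
   (ex_intro _ _ (conj (size_mod_char _) erefl))).
have eqv : \sum_(i < L) D ^+ (N * i) *m F i = D ^+ M *m x.
  rewrite eq mulmx_sumr; apply: eq_bigr => i _; rewrite /F horner_mod.
  have -> : insubd j0 i = i.
    by apply: val_inj => /=; rewrite insubdK // unfold_in ltn_ord.
  rewrite rmorphM /= horner_pow -mulmxE !mulmxA powD subnKC //.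
  by apply: leq_trans aM; rewrite leq_mul2l ltnW ?ltn_ord ?orbT.
rewrite eqv in R1; have [h [hs eh]] := R1.
exists h; split; first by move=> k /hs /leq_trans; apply.
by exists u; split => //; rewrite eh.
Qed.

Definition VT (T : {set 'I_L}) := (D^T + \sum_(j in T) <<row j (H^T)>>)%MS.

Lemma VT_sub T (y : 'cV[R]_N) : (y^T <= VT T)%MS ->
  exists a z, (l0norm a <= #|T|)%N /\ y = H *m a + D *m z.
Proof.
case/sub_addsmxP => [[u1 u2]] /= e.
have /sub_sumsmxP[c ec] := submxMl u2 (\sum_(j in T) <<row j (H^T)>>)%MS.
have [d ed] : exists d : 'I_L -> 'M[R]_1,
    forall j, c j *m <<row j (H^T)>>%MS = d j *m row j (H^T).
  exists (fun j => c j *m <<row j (H^T)>>%MS *m pinvmx (row j (H^T))) => j.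
  by rewrite mulmxKpV // -(genmxE (row j (H^T))) submxMl.
pose a : 'cV[R]_L := \col_j (if j \in T then d j 0 0 else 0).
exists a, u1^T; split.
  rewrite /l0norm; apply: subset_leq_card; apply/subsetP => i.
  by rewrite !inE mxE; case: (i \in T) => //; rewrite eqxx.
apply: trmx_inj; rewrite e ec linearD /= !trmx_mul trmxK addrC; congr (_ + _).
rewrite mulmx_sum_row [LHS]big_mkcond /=; apply: eq_bigr => j _.
rewrite !mxE ed; case: (j \in T) => //; last by rewrite scale0r.
by rewrite {1}(mx11_scalar (d j)) mul_scalar_mx.
Qed.

Lemma VT_sup (T : {set 'I_L}) (y : 'cV[R]_N) (a : 'cV[R]_L) z : (forall j, j \notin T -> a j 0 = 0) ->
  y = H *m a + D *m z -> (y^T <= VT T)%MS.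
Proof.
move=> aT ->; rewrite linearD /= !trmx_mul addrC; apply: addmx_sub_adds.
  exact: submxMl.
rewrite mulmx_sum_row; apply: summx_sub => j _.
case: (boolP (j \in T)) => jT.
  by apply: scalemx_sub; apply: (sumsmx_sup j) => //; rewrite genmxE.
by rewrite mxE aT // scale0r sub0mx.
Qed.

Lemma rank_VT T : (\rank (VT T) <= \rank D + #|T|)%N.
Proof.
apply: leq_trans (mxrank_adds_leqif _ _) _; rewrite mxrank_tr leq_add2l.
rewrite -sum1_card; elim/big_ind2: _ => //.
- by rewrite mxrank0.
- move=> A x B y hA hB; apply: leq_trans (mxrank_adds_leqif _ _) _.
  exact: leq_add.
- by move=> j _; rewrite genmxE; apply: rank_leq_row.
Qed.

Lemma greedy (full : row_full (D^T + H^T)%MS) k : forall T0,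
  (N - \rank (VT T0) <= k)%N ->
  exists T : {set 'I_L}, (#|T| <= #|T0| + k)%N /\ row_full (VT T).
Proof.
elim: k => [|k IH] T0 hk.
  exists T0; split; first by rewrite addn0.
  rewrite /row_full eqn_leq rank_leq_col /=.
  by rewrite -subn_eq0 -leqn0.
case: (boolP (row_full (VT T0))) => f0.
  by exists T0; split => //; rewrite leq_addr.
have /row_subPn[j nj] : ~~ (H^T <= VT T0)%MS.
  apply: contra f0 => sH; rewrite /row_full eqn_leq rank_leq_col /=.
  rewrite /row_full in full; apply: leq_trans (eq_leq (esym (eqP full))) (mxrankS _).
  by rewrite addsmx_sub sH addsmxSl.
have jT0 : j \notin T0.
  apply: contra nj => jT; apply: submx_trans (addsmxSr _ _).
  by apply: (sumsmx_sup j) => //; rewrite genmxE.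
pose T1 := j |: T0.
have eT1 : VT T1 = (D^T + (<<row j (H^T)>> + \sum_(i in T0) <<row i (H^T)>>))%MS.
  by rewrite /VT /T1 big_setU1.
have lt : (VT T0 < VT T1)%MS.
  rewrite ltmxE eT1; apply/andP; split.
    by apply: addsmxS => //; apply: addsmxSr.
  apply: contra nj => sub; apply: submx_trans sub.
  apply: submx_trans (addsmxSr _ _); rewrite -genmxE; apply: addsmxSl.
have hk1 : (N - \rank (VT T1) <= k)%N.
  move: lt; rewrite ltmxErank => /andP[_ lt].
  move: hk; rewrite !leq_subLR addnS => hk.
  by apply: leq_trans hk _; rewrite -addSn leq_add2r.
have [T [cT fT]] := IH T1 hk1.
exists T; split => //; apply: (leq_trans cT).
by rewrite /T1 cardsU1 jT0 add1n addSnnS.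
Qed.

Lemma S0_from_full (full : row_full (D^T + H^T)%MS) :
  (N <= s + \rank D)%N ->
  forall y : 'cV[R]_N, exists a z, (l0norm a <= s)%N /\ y = H *m a + D *m z.
Proof.
move=> hs y.
have h0 : (N - \rank (VT set0) <= N - \rank D)%N.
  by rewrite /VT big_set0 addsmx0 mxrank_tr.
have [T [cT fT]] := greedy full _ _ h0.
have [a [z [la e]]] := VT_sub T y (submx_full _ fT).
exists a, z; split => //; apply: (leq_trans la); apply: (leq_trans cT).
by rewrite cards0 add0n leq_subLR addnC.
Qed.

Local Notation fC := (real_complex R).

Lemma full_from_PBH :
  \rank (row_mx (0%:M - map_mx fC D) (map_mx fC H)) = N ->
  row_full (D^T + H^T)%MS.
Proof.
have z : (0 : R[i])%:M = 0 :> 'M_N by apply/matrixP => i j; rewrite !mxE mul0rn.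
rewrite z sub0r -map_mxN -map_row_mx mxrank_map => hr.
rewrite /row_full -(adds_eqmx (eqmx_opp (D^T)) (eqmx_refl (H^T))) addsmxE.
by rewrite -linearN /= -tr_row_mx mxrank_tr hr.
Qed.

Lemma gen_fact m k (B : 'M[R]_(m, k)) :
  <<B>>%MS = (<<B>>%MS *m pinvmx B) *m B.
Proof. by rewrite mulmxKpV // genmxE. Qed.

Lemma mulmx_cols (v : 'cV[R]_L) : H *m v = \sum_j v j 0 *: col j H.
Proof.
apply: trmx_inj; rewrite trmx_mul mulmx_sum_row linear_sum /=.
by apply: eq_bigr => j _; rewrite linearZ /= tr_col mxE.
Qed.

Definition Vk := (\sum_(i < N) <<(D ^+ i *m H)^T>>)%MS.

Lemma Kal_of_full : row_full Vk -> forall x : 'cV[R]_N,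
  exists q : 'I_L -> {poly R}, x = \sum_j horner_mx D (q j) *m col j H.
Proof.
move=> f x.
have /sub_sumsmxP[u eu] := submx_full x^T f.
pose d (i : 'I_N) := u i *m (<<(D ^+ i *m H)^T>>%MS *m pinvmx ((D ^+ i *m H)^T)).
have ex : x = \sum_(i < N) D ^+ i *m H *m (d i)^T.
  apply: trmx_inj; rewrite eu linear_sum /=; apply: eq_bigr => i _.
  by rewrite [RHS]trmx_mul trmxK /d -mulmxA -gen_fact.
exists (fun j => \poly_(i < N) (d (inord i) 0 j)).
rewrite ex.
under eq_bigr => i _ do rewrite -mulmxA mulmx_cols mulmx_sumr.
rewrite exchange_big /=; apply: eq_bigr => j _.
rewrite (horner_sum _ N (size_poly _ _)) mulmx_suml; apply: eq_bigr => i _.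
by rewrite coef_poly ltn_ord inord_val mxE -!scalemxAl scalemxAr.
Qed.

Lemma annih_a p (w : 'M[R]_(p, N)) : w *m Vk^T = 0 ->
  forall i : 'I_N, w *m (D ^+ i *m H) = 0.
Proof.
move=> hw i.
have : ((D ^+ i *m H)^T <= Vk)%MS by apply: (sumsmx_sup i) => //; rewrite genmxE.
case/submxP => U e.
by rewrite -(trmxK (D ^+ i *m H)) e trmx_mul mulmxA hw mul0mx.
Qed.

Lemma annih_b p (w : 'M[R]_(p, N)) :
  (forall i : 'I_N, w *m (D ^+ i *m H) = 0) -> w *m Vk^T = 0.
Proof.
move=> hw.
have /sub_sumsmxP[u eu] := submx_refl Vk.
rewrite eu linear_sum mulmx_sumr /=; apply: big1 => i _.
by rewrite gen_fact mulmxA trmx_mul trmxK (mulmxA w) hw mul0mx.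
Qed.

Lemma CH_pow : exists g : 'I_N -> R, D ^+ N = \sum_(i < N) g i *: D ^+ i.
Proof.
exists (fun i => ('X^N %% char_poly D)`_i).
by rewrite -horner_pow -horner_mod (horner_sum _ N (size_mod_char _)).
Qed.

Lemma key_eig r (B : 'M[R]_(r, N)) : (0 < r)%N -> row_free B ->
  (B *m D <= B)%MS -> B *m H = 0 ->
  exists lam : R[i],
    (\rank (row_mx (lam%:M - map_mx fC D) (map_mx fC H)) < N)%N.
Proof.
case: r B => [//|r'] B _ fB sBD BH.
pose X := B *m D *m pinvmx B.
have eX : X *m B = B *m D by rewrite mulmxKpV.
have : size (char_poly (map_mx fC X)) != 1%N by rewrite size_char_poly.
case/closed_rootP => lam rl.
have /eigenvalueP[v ev nv] : eigenvalue (map_mx fC X) lam by rewrite eigenvalue_root_char.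
exists lam.
pose w := v *m map_mx fC B.
have nw : w != 0.
  apply: contra nv => /eqP w0; apply/eqP.
  have fB' : row_free (map_mx fC B) by rewrite row_free_map.
  by apply: (row_free_inj fB'); rewrite /= mul0mx.
have wD : w *m map_mx fC D = lam *: w.
  by rewrite /w -mulmxA -map_mxM -eX map_mxM mulmxA ev scalemxAl.
have wH : w *m map_mx fC H = 0.
  by rewrite /w -mulmxA -map_mxM BH map_mx0 mulmx0.
have wk : (w <= kermx (row_mx (lam%:M - map_mx fC D) (map_mx fC H)))%MS.
  apply/sub_kermxP; rewrite mul_mx_row mulmxBr wD wH mul_mx_scalar subrr.
  exact: row_mx0.
have := mxrankS wk; rewrite mxrank_ker.
have : (0 < \rank w)%N by rewrite lt0n mxrank_eq0.
move=> h1 h2; have := leq_trans h1 h2.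
by rewrite subn_gt0.
Qed.

Lemma Kal_main :
  (forall lam : R[i],
     \rank (row_mx (lam%:M - map_mx fC D) (map_mx fC H)) = N) ->
  row_full Vk.
Proof.
move=> PBH; case: (boolP (row_full Vk)) => // nf; exfalso.
pose A := kermx Vk^T.
have AV : A *m Vk^T = 0 by apply/sub_kermxP.
have rA : (0 < \rank A)%N.
  rewrite mxrank_ker mxrank_tr subn_gt0 ltn_neqAle rank_leq_col andbT.
  exact: nf.
have AD : (A *m D <= A)%MS.
  apply/sub_kermxP; apply: annih_b => i.
  rewrite -mulmxA (mulmxA D) DmulX.
  case: (ltnP i.+1 N) => [lt|].
    by have := annih_a _ _ AV (Ordinal lt).
  move=> ge.
  have -> : i.+1 = N by apply/eqP; rewrite eqn_leq ge ltn_ord.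
  have [g eg] := CH_pow; rewrite eg mulmx_suml mulmx_sumr; apply: big1 => k _.
  by rewrite -scalemxAl -scalemxAr (annih_a _ _ AV) scaler0.
have sB : (row_base A <= A)%MS by rewrite eq_row_base.
have BD : (row_base A *m D <= row_base A)%MS.
  rewrite eq_row_base; case/submxP: sB => U e.
  by rewrite e -mulmxA; apply: submx_trans (submxMl U (A *m D)) AD.
have BH : row_base A *m H = 0.
  case/submxP: sB => U e.
  have := annih_a _ _ AV (Ordinal (ltn0Sn n)); rewrite /= expr0 mul1mx => AH.
  by rewrite e -mulmxA AH mulmx0.
have [lam hl] := key_eig _ _ rA (row_base_free A) BD BH.
by move: hl; rewrite PBH ltnn.
Qed.

Lemma nz_entry (F : fieldType) (w : 'rV[F]_N) : w != 0 -> exists i, w 0 i != 0.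
Proof.
move=> nw; case: (pickP (fun i => w 0 i != 0)) => [i wi|none]; first by exists i.
case/negP: nw; apply/eqP/matrixP => a b; rewrite (ord1 a) mxE.
by have := none b => /negbFE/eqP.
Qed.

Lemma nec_PBH : sparse_controllable s D H -> forall lam : R[i],
  \rank (row_mx (lam%:M - map_mx fC D) (map_mx fC H)) = N.
Proof.
move=> C lam; set M := row_mx _ _.
apply/eqP; rewrite eqn_leq rank_leq_row /= leqNgt; apply/negP => lt.
have nk : kermx M != 0 by rewrite -mxrank_eq0 mxrank_ker -lt0n subn_gt0.
pose w := nz_row (kermx M).
have nw : w != 0 by rewrite nz_row_eq0.
have /sub_kermxP wM : (w <= kermx M)%MS by apply: nz_row_sub.
move/eqP: wM; rewrite mul_mx_row row_mx_eq0 => /andP[/eqP w1 /eqP w2].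
have wD : w *m map_mx fC D = lam *: w.
  by apply/eqP; move: w1; rewrite mulmxBr mul_mx_scalar => /eqP; rewrite subr_eq0 eq_sym.
have wt : forall h k, w *m map_mx fC (traj D H 0 h k) = 0.
  move=> h; elim=> [|k IH] /=; first by rewrite map_mx0 mulmx0.
  rewrite map_mxD !map_mxM mulmxDr !mulmxA wD w2 mul0mx addr0.
  by rewrite -scalemxAl IH scaler0.
have [i wi] := nz_entry _ _ nw.
have [K [h [_ e]]] := C 0 (delta_mx i 0).
have := wt h K; rewrite e.
have -> : map_mx fC (delta_mx i 0 : 'cV[R]_N) = delta_mx i 0.
  by apply/matrixP => a b; rewrite !mxE rmorph_nat.
rewrite -colE => /matrixP/(_ 0 0); rewrite !mxE => /eqP.
by rewrite (negbTE wi).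
Qed.

Lemma nec_rank : sparse_controllable s D H -> (N <= s + \rank D)%N.
Proof.
move=> C; rewrite leqNgt; apply/negP => lt.
pose ut (T : {set 'I_L}) := nz_row (kermx (VT T)^T).
have utP (T : {set 'I_L}) (y : 'cV[R]_N) : (y^T <= VT T)%MS -> ut T *m y = 0.
  case/submxP => U e.
  have /sub_kermxP k0 : (ut T <= kermx (VT T)^T)%MS by apply: nz_row_sub.
  by rewrite -(trmxK y) e trmx_mul mulmxA k0 mul0mx.
have utN (T : {set 'I_L}) : (#|T| <= s)%N -> ut T != 0.
  move=> cT; rewrite nz_row_eq0 -mxrank_eq0 mxrank_ker mxrank_tr -lt0n subn_gt0.
  apply: leq_ltn_trans (rank_VT T) _; apply: leq_ltn_trans lt.
  by rewrite addnC leq_add2r.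
pose pT T := \poly_(i < N) (ut T 0 (inord i)).
have pTN (T : {set 'I_L}) : (#|T| <= s)%N -> pT T != 0.
  move=> cT; have [i wi] := nz_entry _ _ (utN T cT).
  apply: contra wi => /eqP p0.
  by have := congr1 (fun p : {poly R} => p`_i) p0; rewrite coef_poly ltn_ord inord_val coef0 => ->.
pose P := \prod_(T : {set 'I_L} | (#|T| <= s)%N) pT T.
have PN : P != 0 by apply/prodf_neq0 => T cT; apply: pTN.
have : ~~ all (root P) [seq i%:R | i <- iota 0 (size P)].
  apply/negP => al.
  have un : uniq [seq i%:R : R | i <- iota 0 (size P)].
    by rewrite map_inj_uniq ?iota_uniq // => a b /eqP; rewrite eqr_nat => /eqP.
  by have := max_poly_roots PN al un; rewrite size_map size_iota ltnn.
case/allPn => t _ nt.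
pose x : 'cV[R]_N := \col_(i < N) t ^+ i.
have [K [h [hs e]]] := C 0 x.
case: K hs e => [|K] hs e.
  have := congr1 (fun M : 'cV[R]_N => M ord0 ord0) e.
  by rewrite /= !mxE expr0 => /eqP; rewrite eq_sym oner_eq0.
pose T := [set i | h K.+1 i 0 != 0].
have cT : (#|T| <= s)%N by apply: hs; rewrite /= ltnS leqnn.
have xT : (x^T <= VT T)%MS.
  apply: (VT_sup T x (h K.+1) (traj D H 0 h K)).
    by move=> j; rewrite inE negbK => /eqP.
  by rewrite -e /= addrC.
have := utP T x xT => /matrixP/(_ 0 0); rewrite !mxE => ez.
have : (pT T).[t] = 0.
  rewrite horner_poly -[X in _ = X]ez; apply: eq_bigr => i _.
  by rewrite inord_val mxE.
by move=> z; move: nt; rewrite /root horner_prod (bigD1 T) //= z mul0r eqxx.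
Qed.
End Ctrl.

Theorem theorem1 (R : realType) (N L s : nat)
  (HN : (0 < N)%N) (HL : (0 < L)%N) (Hs : (0 < s)%N) (HsL : (s <= L)%N)
  (D : 'M[R]_N) (H : 'M[R]_(N, L)) :
  sparse_controllable s D H <->
  ((forall lam : complex R,
      \rank (row_mx (lam%:M - map_mx (fun x : R => (x%:C)%C) D)
                    (map_mx (fun x : R => (x%:C)%C) H)) = N)
   /\ (N <= s + \rank D)%N).
Proof.
case: N HN D H => [//|n] _ D H; split.
  move=> C; split; first by apply: nec_PBH.
  by apply: nec_rank.
case=> PBH hr.
apply: suff_main => //.
  by apply: Kal_of_full; apply: Kal_main.
by apply: S0_from_full => //; apply: full_from_PBH.
Qed.
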